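(* Let $f:\mathbb{R}^N\to\mathbb{R}$ be differentiable, let $w^t\in\Delta^N$ have all entries positive, and suppose $M_t:=\max_i(\Pi^t\nabla f^t)_i>0$; set $\eta_{t,\max}=1/M_t$. Let $\eta_t=\gamma_t\eta_{t,\max}$ with $\gamma_t\in(0,1)$, and let $$w^{t+1}=w^t-\eta_t\,w^t\odot\Pi^t\nabla f^t.$$ Then for any $u\in\Delta^N$, $$D(u\,|\,w^{t+1})-D(u\,|\,w^t)\le\eta_t\,u\cdot(\Pi^t\nabla f^t)+C_{\gamma_t}\eta_t^2\,u\cdot(\Pi^t\nabla f^t)^2,$$ where $C_{\gamma}=\gamma^{-2}\log\!\big(e^{-\gamma}/(1-\gamma)\big)$.
   Context: $\Delta^N=\{w\in\mathbb{R}^N : \sum_i w_i=1,\ w_i\ge 0\}$. Write $\nabla f^t=\nabla f(w^t)$ and $(\Pi^t\nabla f^t)_i=\nabla_i f(w^t)-w^t\cdot\nabla f(w^t)$. $\odot$ denotes componentwise multiplication; $(\Pi^t\nabla f^t)^2$ is the componentwise square. The relative entropy is $D(u\,|\,w)=\sum_{i:\,u_i\ne0}u_i\log(u_i/w_i)$. *)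

(* Defs.v *)
From HB Require Import structures.
From mathcomp Require Import all_boot all_order all_algebra.
From mathcomp Require Import all_classical all_reals all_analysis.
Set Implicit Arguments. Unset Strict Implicit. Unset Printing Implicit Defensive.
Import Order.TTheory GRing.Theory Num.Theory.
Import numFieldNormedType.Exports.
Local Open Scope ring_scope.

Definition simplex (R : realType) (N : nat) (w : 'rV[R]_N) : Prop :=
  (\sum_(i < N) w ord0 i = 1) /\ (forall i, 0 <= w ord0 i).

Definition grad (R : realType) (N : nat) (f : 'rV[R]_N -> R) (w : 'rV[R]_N)
  : 'rV[R]_N := \row_i derive f w (delta_mx ord0 i).

Definition projgrad (R : realType) (N : nat) (f : 'rV[R]_N -> R) (w : 'rV[R]_N)
  : 'rV[R]_N :=
  \row_i (grad f w ord0 i - \sum_(j < N) w ord0 j * grad f w ord0 j).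

Definition relent (R : realType) (N : nat) (u w : 'rV[R]_N) : R :=
  \sum_(i < N | u ord0 i != 0) u ord0 i * ln (u ord0 i / w ord0 i).

Definition Cgamma (R : realType) (g : R) : R :=
  g ^- 2 * ln (expR (- g) / (1 - g)).

(* Main.v *)
Require Import Defs.
From HB Require Import structures.
From mathcomp Require Import all_boot all_order all_algebra.
From mathcomp Require Import all_classical all_reals all_analysis.
Import Order.TTheory GRing.Theory Num.Theory.
Import numFieldNormedType.Exports.
Local Open Scope ring_scope.
From mathcomp Require Import ring lra.

Section S.
Variable R : realType.

Lemma mono_oo (f df : R -> R) (a b : R) :
  (forall x, a < x < b -> is_derive x 1 f (df x)) ->
  (forall x, a < x < b -> 0 <= df x) ->
  forall x y, a < x -> x <= y -> y < b -> f x <= f y.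
Proof.
move=> D P x y ax xy yb.
have Dv : forall z, z \in `]a, b[ -> derivable f z 1.
  by move=> z; rewrite in_itv /= => /D [].
apply: (@ger0_derive1_le_oo R f a b Dv) => //.
- move=> z zi; rewrite derive1E.
  move: zi; rewrite in_itv /= => zi.
  by rewrite (@derive_val _ _ _ _ _ _ _ (D z zi)); exact: P.
- move=> z zi; apply/differentiable_continuous/derivable1_diffP; apply: Dv; exact: (set_mem zi).
- by rewrite in_itv /= ax (le_lt_trans xy yb).
- by rewrite in_itv /= yb (lt_le_trans ax xy).
Qed.

Lemma dL (x : R) : x < 1 -> is_derive x 1 (fun y : R => ln (1 - y)) (- (1 - x)^-1).
Proof.
move=> x1.
have h1 : is_derive x 1 (fun y : R => 1 - y) (-1).
  have H : is_derive x 1 (cst (1:R) - id) (0 - 1) by apply: is_deriveB.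
  by rewrite sub0r in H.
have h2 : is_derive (1 - x) 1 (@ln R) (1 - x)^-1 by apply: is_derive1_ln; lra.
have := @is_derive1_comp R (@ln R) (fun y => 1 - y) x _ _ h2 h1.
by rewrite mulrN1.
Qed.


Lemma dB (f g : R -> R) df dg (x : R) : is_derive x 1 f df -> is_derive x 1 g dg ->
  is_derive x 1 (fun y => f y - g y) (df - dg).
Proof. move=> H1 H2; exact: is_deriveB. Qed.
Lemma dD (f g : R -> R) df dg (x : R) : is_derive x 1 f df -> is_derive x 1 g dg ->
  is_derive x 1 (fun y => f y + g y) (df + dg).
Proof. move=> H1 H2; exact: is_deriveD. Qed.
Lemma dN (f : R -> R) df (x : R) : is_derive x 1 f df ->
  is_derive x 1 (fun y => - f y) (- df).
Proof. move=> H1; exact: is_deriveN. Qed.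
Lemma dM (f g : R -> R) df dg (x : R) : is_derive x 1 f df -> is_derive x 1 g dg ->
  is_derive x 1 (fun y => f y * g y) (f x * dg + g x * df).
Proof. move=> H1 H2; exact: is_deriveM. Qed.
Lemma dV (f : R -> R) df (x : R) : f x != 0 -> is_derive x 1 f df ->
  is_derive x 1 (fun y => (f y)^-1) (- (f x) ^- 2 * df).
Proof. move=> H1 H2; exact: is_deriveV. Qed.
Lemma dId (x : R) : is_derive x 1 (fun y => y) 1.
Proof. exact: is_derive_id. Qed.
Lemma dC (c x : R) : is_derive x 1 (fun y => c) 0.
Proof. exact: is_derive_cst. Qed.

Arguments dB {f g df dg x}.
Arguments dD {f g df dg x}.
Arguments dN {f df x}.
Arguments dM {f g df dg x}.
Arguments dV {f df x}.

Definition Pf (y : R) := - ln (1 - y) - y - y * y / 2.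
Lemma Pf_mono x y : x <= y -> y < 1 -> Pf x <= Pf y.
Proof.
move=> xy y1.
apply: (@mono_oo Pf (fun z => (1 - z)^-1 - 1 - z) (x - 1) 1) => //; last by lra.
- move=> z /andP[_ z1].
  have H := dB (dB (dN (@dL z z1)) (dId z)) (dM (dM (dId z) (dId z)) (dC 2^-1 z)).
  apply: is_derive_eq H _; rewrite opprK. field. lra.
- move=> z /andP[_ z1].
  have -> : (1 - z)^-1 - 1 - z = z ^+ 2 / (1 - z) by field; lra.
  apply: divr_ge0; [exact: sqr_ge0| lra].
Qed.


Definition Mf (y : R) := y * y / (1 - y) + 2 * ln (1 - y) + 2 * y.
Lemma Mf_ge0 x : 0 <= x -> x < 1 -> 0 <= Mf x.
Proof.
move=> x0 x1.
have -> : 0 = Mf 0 by rewrite /Mf subr0 ln1 !(mul0r, mulr0, addr0).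
apply: (@mono_oo Mf (fun z => (z / (1 - z)) ^+ 2) (-1) 1) => //; try lra.
- move=> z /andP[_ z1].
  have z1' : (fun y => 1 - y) z != 0 by rewrite /=; apply/eqP; lra.
  have H := dD (dD (dM (dM (dId z) (dId z)) (@dV (fun y => 1 - y) _ z z1' (dB (dC 1 z) (dId z))))
             (dM (dC 2 z) (@dL z z1))) (dM (dC 2 z) (dId z)).
  apply: is_derive_eq H _. field. lra.
- by move=> z _; exact: sqr_ge0.
Qed.

Definition phi (y : R) := (- ln (1 - y) - y) / (y * y).
Lemma phi_mono x y : 0 < x -> x <= y -> y < 1 -> phi x <= phi y.
Proof.
move=> x0 xy y1.
apply: (@mono_oo phi (fun z => Mf z / (z ^+ 3)) 0 1) => //.
- move=> z /andP[z0 z1].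
  have zz : (fun y => y * y) z != 0 by rewrite /= mulf_neq0 // gt_eqF.
  have H := dM (dB (dN (@dL z z1)) (dId z)) (@dV (fun y => y * y) _ z zz (dM (dId z) (dId z))).
  apply: is_derive_eq H _; rewrite /Mf. field. rewrite gt_eqF //=. lra.
- move=> z /andP[z0 z1]; apply: divr_ge0; first by apply: Mf_ge0; lra.
  by apply: exprn_ge0; lra.
Qed.

Lemma key (x g : R) : 0 < g < 1 -> x <= g ->
  - ln (1 - x) - x <= g ^- 2 * (- ln (1 - g) - g) * x ^+ 2.
Proof.
move=> /andP[g0 g1] xg.
have hg : g ^+ 2 / 2 <= - ln (1 - g) - g.
  have := @Pf_mono 0 g (ltW g0) g1; rewrite /Pf !subr0 ln1 !(mul0r, oppr0, subr0).
  rewrite expr2; lra.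
have C2 : 2^-1 <= g ^- 2 * (- ln (1 - g) - g).
  rewrite -[leLHS](mulKf (x := g ^+ 2)) ?expf_neq0 ?gt_eqF //.
  apply: ler_wpM2l; first by rewrite invr_ge0 exprn_ge0 // ltW.
  exact: hg.
case: (leP x 0) => x0.
- have := @Pf_mono x 0 x0 ltr01; rewrite /Pf !subr0 ln1 !(mul0r, oppr0, subr0) => hx.
  have hx2 : 0 <= x ^+ 2 by exact: sqr_ge0.
  have : 2^-1 * x ^+ 2 <= g ^- 2 * (- ln (1 - g) - g) * x ^+ 2 by exact: ler_wpM2r.
  move: hx; rewrite -expr2. lra.
- have := @phi_mono x g x0 xg g1; rewrite /phi => H.
  have xx : 0 < x * x by rewrite mulr_gt0.
  rewrite -(ler_pM2r xx) in H.
  rewrite mulfVK ?gt_eqF // in H.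
  by move: H; rewrite !expr2 invfM; congr (_ <= _); ring.
Qed.


Lemma lnD' (a b : R) : 0 < a -> 0 < b -> ln (a / b) = ln a - ln b.
Proof. by move=> a0 b0; rewrite ln_div // posrE. Qed.
Lemma lnM' (a b : R) : 0 < a -> 0 < b -> ln (a * b) = ln a + ln b.
Proof. by move=> a0 b0; rewrite lnM // posrE. Qed.

Lemma CgE (g : R) : g < 1 -> Cgamma g = g ^- 2 * (- ln (1 - g) - g).
Proof.
move=> g1; rewrite /Cgamma lnD' ?expR_gt0 ?subr_gt0 // expRK.
by congr (_ * _); ring.
Qed.

End S.


Theorem theoremA1 (R : realType) (N : nat) (f : 'rV[R]_N -> R)
  (w : 'rV[R]_N) (M gamma : R) (u : 'rV[R]_N) :
  (forall x : 'rV[R]_N, differentiable f x) ->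
  simplex w -> (forall i, 0 < w ord0 i) ->
  (* M = max_i (Pi^t grad f^t)_i *)
  (forall i, projgrad f w ord0 i <= M) ->
  (exists i, projgrad f w ord0 i = M) ->
  0 < M ->
  0 < gamma < 1 ->
  simplex u ->
  let eta := gamma * M^-1 in
  let w' : 'rV[R]_N :=
    \row_i (w ord0 i - eta * (w ord0 i * projgrad f w ord0 i)) in
  relent u w' - relent u w <=
    eta * (\sum_(i < N) u ord0 i * projgrad f w ord0 i)
    + Cgamma gamma * eta ^+ 2 *
        (\sum_(i < N) u ord0 i * (projgrad f w ord0 i) ^+ 2).
Proof.
move=> _ _ wpos Mge _ M0 /andP[g0 g1] [_ u0]; cbv zeta.
set g := projgrad f w.
set eta := gamma / M.
set w' := \row_i (w ord0 i - eta * (w ord0 i * g ord0 i)).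
have eta0 : 0 <= eta by rewrite /eta mulr_ge0 ?invr_ge0 // ltW.
have xle i : eta * g ord0 i <= gamma.
  have := ler_wpM2l eta0 (Mge i); rewrite /eta mulfVK // gt_eqF //.
have w'E i : w' ord0 i = w ord0 i * (1 - eta * g ord0 i) by rewrite mxE; ring.
have -> : eta * (\sum_(i < N) u ord0 i * g ord0 i)
    + Cgamma gamma * eta ^+ 2 * (\sum_(i < N) u ord0 i * (g ord0 i) ^+ 2)
    = \sum_(i < N | u ord0 i != 0)
        u ord0 i * (eta * g ord0 i + Cgamma gamma * (eta * g ord0 i) ^+ 2).
  rewrite [RHS]big_mkcond /= !mulr_sumr -big_split /=; apply: eq_bigr => i _.
  case: (eqVneq (u ord0 i) 0) => [->|_] /=; ring.
rewrite /relent -sumrB; apply: ler_sum => i ui.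
have upos : 0 < u ord0 i by rewrite lt_def ui u0.
rewrite -mulrBr; apply: ler_wpM2l; first exact: ltW.
have x1 : 0 < 1 - eta * g ord0 i by have := xle i; lra.
rewrite w'E !lnD' ?mulr_gt0 // lnM' //.
have := @key R (eta * g ord0 i) (gamma) _ (xle i); rewrite -CgE //.
have gg : 0 < gamma < 1 by rewrite g0 g1.
move=> /(_ gg) K; lra.
Qed.
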